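(* Let $n\equiv 9\pmod{12}$. (1) If there exists an $\mathrm{LKTS}(n)$, then there exists a $\mathrm{TOC}_3(n,5,3)$. (2) If there exists an $\mathrm{OLKTS}(n)$, then there exists a $\mathrm{TOC}_3(n+1,5,3)$.
   Context: $\mathcal{H}_q(n,w)$ is the set of all words of length $n$ over $\mathbb{Z}_q$ with exactly $w$ nonzero entries, with the Hamming distance. An $(n,d,w)_q$-code is a nonempty subset of $\mathcal{H}_q(n,w)$ in which any two distinct words have Hamming distance at least $d$; $A_q(n,d,w)$ is the maximum size of such a code and a code of this size is optimal. A $\mathrm{TOC}_q(n,d,w)$ is a partition of $\mathcal{H}_q(n,w)$ into mutually disjoint optimal $(n,d,w)_q$-codes. A Kirkman triple system $\mathrm{KTS}(n)$ is a Steiner triple system on an $n$-set (a family of 3-subsets such that every pair lies in exactly one of them) whose triples can be partitioned into parallel classes, each partitioning the point set. A large set $\mathrm{LKTS}(n)$ is a partition of all 3-subsets of an $n$-set into block sets of $\mathrm{KTS}(n)$'s on that set. An overlarge set $\mathrm{OLKTS}(n)$ is a partition of all 3-subsets of an $(n+1)$-set $X$ into block sets $\mathcal{B}_x$, $x\in X$, such that each $(X\setminus\{x\},\mathcal{B}_x)$ is a $\mathrm{KTS}(n)$. *)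

(* Defs.v *)
From mathcomp Require Import all_boot.
Set Implicit Arguments. Unset Strict Implicit. Unset Printing Implicit Defensive.

(* Words of length n over Z_q, with Z_q represented as 'I_q (0 = ord value 0). *)
Definition word (q n : nat) := {ffun 'I_n -> 'I_q}.

Definition wt (q n : nat) (u : word q n) : nat := #|[set i | val (u i) != 0]|.

Definition hdist (q n : nat) (u v : word q n) : nat := #|[set i | u i != v i]|.

Definition Hqnw (q n w : nat) : {set word q n} := [set u | wt u == w].

Definition is_code (q n d w : nat) (C : {set word q n}) : bool :=
  [&& C != set0, C \subset Hqnw q n w &
      [forall u in C, forall v in C, (u != v) ==> (d <= hdist u v)]].

(* A_q(n,d,w): maximum size of such a code (0 if none exists). *)
Definition Aq (q n d w : nat) : nat :=
  \max_(C : {set word q n} | is_code d w C) #|C|.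

Definition optimal_code (q n d w : nat) (C : {set word q n}) : bool :=
  is_code d w C && (#|C| == Aq q n d w).

Definition TOC (q n d w : nat) (P : {set {set word q n}}) : Prop :=
  partition P (Hqnw q n w) /\ (forall C, C \in P -> optimal_code d w C).

Definition TOC_exists (q n d w : nat) : Prop := exists P, @TOC q n d w P.

Definition STS (T : finType) (X : {set T}) (B : {set {set T}}) : Prop :=
  (forall b, b \in B -> b \subset X /\ #|b| = 3) /\
  (forall x y, x \in X -> y \in X -> x != y ->
     exists! b, b \in B /\ x \in b /\ y \in b).

Definition KTS (T : finType) (X : {set T}) (B : {set {set T}}) : Prop :=
  STS X B /\
  exists R : {set {set {set T}}},
    partition R B /\ (forall Pc, Pc \in R -> partition Pc X).

Definition triples (T : finType) : {set {set T}} := [set b : {set T} | #|b| == 3].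

Definition LKTS (n : nat) : Prop :=
  exists L : {set {set {set 'I_n}}},
    partition L (triples 'I_n) /\ (forall B, B \in L -> KTS [set: 'I_n] B).

Definition OLKTS (n : nat) : Prop :=
  exists B : 'I_n.+1 -> {set {set 'I_n.+1}},
    (forall x y, x != y -> [disjoint B x & B y]) /\
    (\bigcup_(x : 'I_n.+1) B x = triples 'I_n.+1) /\
    (forall x, KTS ([set: 'I_n.+1] :\ x) (B x)).

(* Main.v *)
Require Import Defs.
From HB Require Import structures.
From mathcomp Require Import all_boot zify.
Set Implicit Arguments. Unset Strict Implicit. Unset Printing Implicit Defensive.


Definition V := (bool * bool * bool)%type.
Definition V0 : V := (false, false, false).
Definition addV (a b : V) : V := (a.1.1 (+) b.1.1, a.1.2 (+) b.1.2, a.2 (+) b.2).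
Definition dot (a i : V) : bool := (a.1.1 && i.1.1) (+) (a.1.2 && i.1.2) (+) (a.2 && i.2).

Lemma addVA : associative addV.
Proof. by case=> [[[] []] []] [[[] []] []] [[[] []] []]. Qed.
Lemma addVC : commutative addV.
Proof. by case=> [[[] []] []] [[[] []] []]. Qed.
Lemma add0V : left_id V0 addV.
Proof. by case=> [[? ?] ?]. Qed.
HB.instance Definition _ := Monoid.isComLaw.Build V V0 addV addVA addVC add0V.

Definition Vs : seq V := [:: (false,false,false); (false,false,true); (false,true,false); (false,true,true);
  (true,false,false); (true,false,true); (true,true,false); (true,true,true)].
Lemma memVs v : v \in Vs. Proof. by case: v => [[[] []] []]. Qed.

Definition indep3 (a b c : V) :=
  [&& a != V0, b != V0, c != V0, a != b, a != c, b != c & addV a (addV b c) != V0].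

Definition trip a b c i : V := (dot a i, dot b i, dot c i).

Lemma brute : all (fun a => all (fun b => all (fun c => indep3 a b c ==>
  (all (fun p => has (fun i => trip a b c i == p) Vs) Vs &&
   all (fun i => all (fun i' => (trip a b c i == trip a b c i') ==> (i == i')) Vs) Vs)) Vs) Vs) Vs.
Proof. by vm_compute. Qed.

Lemma indep3_surj a b c : indep3 a b c -> forall p q r, exists i, [/\ dot a i = p, dot b i = q & dot c i = r].
Proof.
move=> H p q r; move: brute => /allP/(_ a (memVs a))/allP/(_ b (memVs b))/allP/(_ c (memVs c)).
move=> /implyP/(_ H)/andP[H1 _].
have /hasP[i _ /eqP[]] := allP H1 (p,q,r) (memVs _).
by exists i.
Qed.

Lemma indep3_inj a b c i i' : indep3 a b c -> dot a i = dot a i' -> dot b i = dot b i' -> dot c i = dot c i' -> i = i'.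
Proof.
move=> H e1 e2 e3; move: brute => /allP/(_ a (memVs a))/allP/(_ b (memVs b))/allP/(_ c (memVs c)).
move=> /implyP/(_ H)/andP[_ H1].
have := allP (allP H1 i (memVs _)) i' (memVs _).
by rewrite /trip e1 e2 e3 eqxx /= => /eqP.
Qed.

Lemma card_V : #|{: V}| = 8.
Proof. by rewrite !card_prod card_bool. Qed.

Lemma sum3_neq (v a b : V) : v != addV a b -> addV v (addV a b) != V0.
Proof. by case: v a b => [[[] []] []] [[[] []] []] [[[] []] []]. Qed.


Definition supp (m : nat) (u : word 3 m) : {set 'I_m} := [set i | val (u i) != 0].

Lemma wt_supp m (u : word 3 m) : wt u = #|supp u|.
Proof. by []. Qed.

Lemma hdist_ge5 m (u v : word 3 m) : #|supp u| = 3 -> #|supp v| = 3 ->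
  #|supp u :&: supp v| <= 1 -> (forall x, x \in supp u -> x \in supp v -> u x != v x) ->
  5 <= hdist u v.
Proof.
move=> su sv sI dif.
have: supp u :|: supp v \subset [set i | u i != v i].
  apply/subsetP=> i; rewrite inE => /orP[iu|iv]; rewrite inE.
    case iv: (i \in supp v); first exact: dif.
    move: iu iv; rewrite !inE => iu /negbFE iv; apply/negP => /eqP e.
    by move: iu; rewrite e (eqP iv).
  case iu: (i \in supp u); first exact: dif.
  move: iu iv; rewrite !inE => /negbFE iu iv; apply/negP => /eqP e.
  by move: iv; rewrite -e (eqP iu).
move/subset_leq_card; rewrite /hdist.
have := cardsUI (supp u) (supp v); rewrite su sv; move=> H1 H2; move: sI H1 H2. set a := #|supp u :&: supp v|; set b := #|supp u :|: supp v|; set c := #|[set i | u i != v i]|. lia.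
Qed.

Lemma hdist_le4 m (u v : word 3 m) x : #|supp u| = 3 -> #|supp v| = 3 ->
  x \in supp u -> x \in supp v -> u x = v x -> hdist u v <= 4.
Proof.
move=> su sv xu xv e.
have: [set i | u i != v i] \subset (supp u :|: supp v) :\ x.
  apply/subsetP=> i; rewrite !inE => d; apply/andP; split.
    by apply: contraNneq d => ->; rewrite e.
  apply/negPn/negP => /norP[/negbNE/eqP u0 /negbNE/eqP v0]; move: d.
  suff -> : u i = v i by rewrite eqxx.
  by apply: val_inj; rewrite u0 v0.
move/subset_leq_card; rewrite /hdist.
have := cardsUI (supp u) (supp v); rewrite su sv.
have := cardsD1 x (supp u :|: supp v); rewrite in_setU xu /=.
have : 0 < #|supp u :&: supp v| by apply/card_gt0P; exists x; rewrite inE xu xv.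
set a := #|supp u :&: supp v|; set b := #|supp u :|: supp v|; set c := #|[set i | u i != v i]|.
set d := #|_ :\ x|. lia.
Qed.

Lemma code_col_le2 m (C : {set word 3 m}) x : is_code 5 3 C ->
  #|[set u in C | val (u x) != 0]| <= 2.
Proof.
case/and3P=> _ /subsetP CH /forallP Cd.
set Cx := [set u in C | _].
have inj : {in Cx &, injective (fun u : word 3 m => u x)}.
  move=> u v; rewrite !inE => /andP[uC ux] /andP[vC vx] e.
  apply/eqP; apply: contraT => uv.
  have /forall_inP/(_ v vC)/implyP/(_ uv) := implyP (Cd u) uC.
  have su : #|supp u| = 3 by have := CH u uC; rewrite inE => /eqP.
  have sv : #|supp v| = 3 by have := CH v vC; rewrite inE => /eqP.
  have := hdist_le4 su sv _ _ e; rewrite !inE ux vx => /(_ isT isT).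
  set a := hdist u v; lia.
have sub : (fun u : word 3 m => u x) @: Cx \subset [set~ (ord0 : 'I_3)].
  apply/subsetP=> k /imsetP[u]; rewrite !inE => /andP[_ ux] ->.
  by apply: contra ux => /eqP ->.
by rewrite -(card_in_imset inj); apply: leq_trans (subset_leq_card sub) _; rewrite cardsC1 card_ord.
Qed.

Lemma code_bound m (C : {set word 3 m}) : is_code 5 3 C -> 3 * #|C| <= 2 * m.
Proof.
move=> Cc; have /and3P[_ /subsetP CH _] := Cc.
have -> : 3 * #|C| = \sum_(u in C) #|supp u|.
  rewrite mulnC -sum_nat_const; apply: eq_bigr => u uC.
  by have := CH u uC; rewrite inE => /eqP.
under eq_bigr do rewrite -sum1_card big_mkcond /=.
rewrite exchange_big /=.
have -> : 2 * m = \sum_(x : 'I_m) 2 by rewrite sum_nat_const card_ord mulnC.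
apply: leq_sum => x _.
rewrite -big_mkcondr sum1dep_card.
apply: leq_trans (code_col_le2 x Cc).
by apply: subset_leq_card; apply/subsetP => u; rewrite !inE.
Qed.

Lemma code_optimal m (C : {set word 3 m}) : is_code 5 3 C -> 2 * m <= 3 * #|C| + 2 ->
  optimal_code 5 3 C.
Proof.
move=> Cc le; rewrite /optimal_code Cc /= eqn_leq; apply/andP; split.
  rewrite /Aq; apply: (@leq_bigmax_cond _ (fun C0 : {set word 3 m} => is_code 5 3 C0) (fun C0 : {set word 3 m} => #|C0|) C Cc).
apply/bigmax_leqP => C' C'c.
have := code_bound C'c; set a := #|C'|; set b := #|C|; lia.
Qed.


Lemma triv_eq (T : finType) (P : {set {set T}}) A A' x : trivIset P -> A \in P -> A' \in P ->
  x \in A -> x \in A' -> A = A'.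
Proof. by move=> tP AP A'P xA xA'; rewrite -(def_pblock tP AP xA) (def_pblock tP A'P xA'). Qed.

Section Comb.
Variable T : finType.

Lemma sts_uniq (X : {set T}) Bl b b' x y : STS X Bl -> b \in Bl -> b' \in Bl ->
  x \in b -> y \in b -> x \in b' -> y \in b' -> x != y -> b = b'.
Proof.
case=> H1 H2 bB b'B xb yb xb' yb' xy.
have [/subsetP bX _] := H1 b bB.
have [c [_ uc]] := H2 x y (bX x xb) (bX y yb) xy.
by rewrite -(uc b) ?(uc b').
Qed.

Lemma sts_meet (X : {set T}) Bl b b' : STS X Bl -> b \in Bl -> b' \in Bl -> b != b' ->
  #|b :&: b'| <= 1.
Proof.
move=> S bB b'B bb'; apply/card_le1_eqP => x y; rewrite !inE => /andP[xb xb'] /andP[yb yb'].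
apply/eqP; apply: contraT => xy; move: bb'.
by rewrite eq_sym in xy; rewrite (sts_uniq S bB b'B xb yb xb' yb' xy) eqxx.
Qed.

Lemma card3_dec (b : {set T}) x : #|b| = 3 -> x \in b ->
  exists y z, [/\ b = [set x; y; z], x != y, x != z & y != z].
Proof.
move=> cb xb; have : #|b :\ x| == 2 by move: cb; rewrite (cardsD1 x) xb add1n => -[->].
case/cards2P=> y [z [yz e]].
have : y \in b :\ x by rewrite e !inE eqxx.
have : z \in b :\ x by rewrite e !inE eqxx orbT.
rewrite !inE => /andP[zx _] /andP[yx _].
exists y, z; split => //; try by rewrite eq_sym.
by rewrite -(setD1K xb) e setUA.
Qed.


Lemma kts_classes_even (X : {set T}) Bl R n : STS X Bl -> partition R Bl ->
  (forall Pc, Pc \in R -> partition Pc X) -> #|X| = n -> n %% 12 = 9 -> ~~ odd #|R|.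
Proof.
move=> S pR pPc cX n9.
have [x0 x0X] : exists x0, x0 \in X by apply/card_gt0P; rewrite cX; lia.
have [SB SU] := S.
have tR : trivIset R by case/and3P: pR.
set Bx := [set b in Bl | x0 \in b].
have e1 : #|R| = #|Bx|.
  pose f := fun Pc : {set {set T}} => pblock Pc x0.
  have x0c Pc : Pc \in R -> x0 \in cover Pc by move=> PcR; rewrite (cover_partition (pPc _ PcR)).
  have tPc Pc : Pc \in R -> trivIset Pc by move=> PcR; case/and3P: (pPc _ PcR).
  have inj : {in R &, injective f}.
    move=> Pc Pc' PcR Pc'R e.
    apply: (triv_eq tR PcR Pc'R (pblock_mem (x0c _ PcR))).
    by move: e; rewrite /f => ->; apply: pblock_mem; apply: x0c.
  rewrite -(card_in_imset inj); apply: eq_card => b; apply/imsetP/idP.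
    case=> Pc PcR ->; rewrite inE /f mem_pblock x0c // andbT.
    exact: (subsetP (partitionS pR PcR)) (pblock_mem (x0c _ PcR)).
  rewrite inE => /andP[bB x0b].
  have bc : b \in cover R by rewrite (cover_partition pR).
  exists (pblock R b); first exact: pblock_mem.
  by rewrite /f (def_pblock (tPc _ (pblock_mem bc)) _ x0b) // mem_pblock.
have e2 : #|X :\ x0| = #|Bx| * 2.
  pose g := fun b : {set T} => b :\ x0.
  have inj : {in Bx &, injective g}.
    move=> b b'; rewrite !inE => /andP[_ xb] /andP[_ xb'] e.
    by rewrite -(setD1K xb) -(setD1K xb'); congr (x0 |: _).
  have pQ : partition (g @: Bx) (X :\ x0).
    apply/and3P; split.
    - apply/eqP/setP => y; apply/bigcupP/idP.
        case=> A /imsetP[b]; rewrite inE => /andP[bB _] -> ; rewrite /g !inE => /andP[yx yb]; rewrite yx /=.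
        by have [/subsetP sb _] := SB b bB; apply: sb.
      rewrite !inE => /andP[yx0 yX].
      have x0y : x0 != y by rewrite eq_sym.
      have [c [[cB [x0c yc]] _]] := SU x0 y x0X yX x0y.
      exists (g c); first by apply: imset_f; rewrite inE cB x0c.
      by rewrite /g !inE yx0 yc.
    - apply/trivIsetP => A A' /imsetP[b] + -> /imsetP[b'] + -> neq.
      rewrite !inE => /andP[bB x0b] /andP[b'B x0b'].
      rewrite -setI_eq0; apply/eqP/setP => y; rewrite in_set0 in_setI; apply/negP.
      move=> /andP[/setD1P[yx yb] /setD1P[_ yb']].
      have x0y : x0 != y by rewrite eq_sym.
      by move: neq; rewrite (sts_uniq S bB b'B x0b yb x0b' yb' x0y) eqxx.
    - apply/imsetP => -[b]; rewrite inE => /andP[bB xb] e.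
      have [_ cb] := SB b bB; move: cb; rewrite (cardsD1 x0) xb -/(g b) -e cards0.
      by [].
  rewrite (card_partition pQ) -(card_in_imset inj) -sum_nat_const; apply: eq_bigr => A /imsetP[b].
  rewrite inE => /andP[bB xb] ->; have [_ cb] := SB b bB.
  by move: cb; rewrite /g (cardsD1 x0) xb add1n => -[].
have := cardsD1 x0 X; rewrite x0X e2 cX -e1 => e3.
have : #|R| %% 2 = 0 by set r := #|R|; lia.
by rewrite modn2; case: odd.
Qed.

End Comb.


Definition partner k := if odd k then k.-1 else k.+1.

Lemma partner_props k : [/\ partner (partner k) = k, partner k != k & odd (partner k) = ~~ odd k].
Proof.
case: k => [|k]; first by [].
rewrite /partner /=; case ok: (odd k) => /=; rewrite ?ok /=; split => //; lia.
Qed.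

Lemma pairing (A : finType) (R : {set A}) : ~~ odd #|R| ->
  exists (sg : A -> A) (s : A -> bool), forall P, P \in R ->
    [/\ sg P \in R, sg P != P, sg (sg P) = P & s (sg P) = ~~ s P].
Proof.
move=> ev; set e := enum R.
have ue : uniq e := enum_uniq (mem R).
have se : size e = #|R| by rewrite cardE.
exists (fun P => nth P e (partner (index P e))), (fun P => odd (index P e)) => P PR.
have Pe : P \in e by rewrite mem_enum.
set k := index P e.
have ks : k < size e by rewrite index_mem.
have [pp pk po] := partner_props k.
have pks : partner k < size e.
  rewrite /partner; case ok: (odd k); first by apply: leq_ltn_trans ks; apply: leq_pred.
  rewrite ltn_neqAle ks andbT; apply/negP => /eqP ek.
  by move: ev; rewrite -se -ek /= ok.
have ie : index (nth P e (partner k)) e = partner k by rewrite index_uniq.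
split.
- by rewrite -mem_enum mem_nth.
- by apply: contra pk => /eqP h; rewrite -ie h.
- by rewrite ie pp nth_index.
- by rewrite ie po.
Qed.


Lemma card_setU1r_le (T : finType) (A : {set T}) a n : #|A| <= n -> #|A :|: [set a]| <= n.+1.
Proof. by move=> le; rewrite setUC cardsU1; case: (a \notin A); rewrite ?add1n ?add0n ?ltnS // (leq_trans le). Qed.

Section Greedy.
Variable T : finType.

Definition pind (h : T -> V) (S : {set T}) :=
  [/\ forall x, x \in S -> h x != V0,
      forall x y, x \in S -> y \in S -> x != y -> h x != h y
    & #|S| = 3 -> \big[addV/V0]_(k in S) h k != V0].

Lemma in_set3 (k x y z : T) : (k \in [set x; y; z]) = [|| k == x, k == y | k == z].
Proof. by rewrite !inE orbA. Qed.

Lemma big3 (F : T -> V) x y z : x != y -> x != z -> y != z ->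
  \big[addV/V0]_(k in [set x; y; z]) F k = addV (F x) (addV (F y) (F z)).
Proof.
move=> xy xz yz.
have -> : [set x; y; z] = x |: [set y; z] by rewrite setUA.
rewrite big_setU1 ?inE ?negb_or ?xy ?xz // big_setU1 ?inE ?yz // big_set1 //=.
Qed.

Lemma card3 (x y z : T) : x != y -> x != z -> y != z -> #|[set x; y; z]| = 3.
Proof.
move=> xy xz yz; have -> : [set x; y; z] = x |: [set y; z] by rewrite setUA.
by rewrite cardsU1 cards2 !inE negb_or xy xz yz.
Qed.

Lemma pind_ext h h' (S : {set T}) : {in S, h =1 h'} -> pind h S -> pind h' S.
Proof.
move=> e [H1 H2 H3]; split.
- by move=> x xS; rewrite -e // H1.
- by move=> x y xS yS xy; rewrite -!e // H2.
- by move=> cS; rewrite -(eq_bigr _ (fun k kS => e k kS)) H3.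
Qed.

Lemma pind0 h : pind h set0.
Proof. by split => [x|x y|]; rewrite ?inE ?cards0. Qed.

Lemma step_block h (A : {set T}) x y z v :
  x != y -> x != z -> y != z -> x \in A ->
  pind h ([set x; y; z] :&: (A :\ x)) ->
  v != V0 -> v != h y -> v != h z -> v != addV (h y) (h z) ->
  pind (fun k => if k == x then v else h k) ([set x; y; z] :&: A).
Proof.
move=> xy xz yz xA [H1 H2 _] v0 vy vz vyz.
have inS' k : k != x -> k \in [set x; y; z] :&: A -> k \in [set x; y; z] :&: (A :\ x).
  by move=> kx; rewrite !inE kx.
have yx : y != x by rewrite eq_sym.
have zx : z != x by rewrite eq_sym.
have oth k : k != x -> k \in [set x; y; z] :&: A -> v != h k.
  move=> kx; rewrite inE in_set3 (negbTE kx) /= => /andP[/orP[] /eqP -> _] //.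
split.
- move=> k kS; case: (eqVneq k x) => [_|kx] //.
  exact: H1 (inS' _ kx kS).
- move=> k1 k2 k1S k2S k12; case: (eqVneq k1 x) => [e1|k1x]; case: (eqVneq k2 x) => [e2|k2x].
  + by rewrite e1 e2 eqxx in k12.
  + by apply: oth.
  + by rewrite eq_sym; apply: oth.
  + by apply: H2 => //; apply: inS'.
- move=> cS.
  have eS : [set x; y; z] :&: A = [set x; y; z].
    apply/eqP; rewrite eqEcard subsetIl cS.
    by rewrite card3.
  rewrite eS big3 // eqxx (negbTE yx) (negbTE zx).
  exact: sum3_neq.
Qed.


Lemma greedy (X : {set T}) (P1 P2 : {set {set T}}) :
  partition P1 X -> partition P2 X ->
  (forall b, b \in P1 -> #|b| = 3) -> (forall b, b \in P2 -> #|b| = 3) ->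
  exists h : T -> V, forall b, b \in P1 :|: P2 -> pind h b.
Proof.
move=> pP1 pP2 c1 c2.
suff: forall k (A : {set T}), A \subset X -> #|A| = k ->
    exists h, forall b, b \in P1 :|: P2 -> pind h (b :&: A).
  move=> /(_ _ X (subxx X) erefl) [h Hh]; exists h => b bP.
  have bX : b \subset X by case/setUP: bP => bP; [apply: (partitionS pP1) | apply: (partitionS pP2)].
  by have := Hh b bP; rewrite (setIidPl bX).
elim=> [|k IH] A AX cA.
  by exists (fun _ => V0) => b _; rewrite (cards0_eq cA) setI0; apply: pind0.
have [x xA] : exists x, x \in A by apply/card_gt0P; rewrite cA.
have cA' : #|A :\ x| = k by move: cA; rewrite (cardsD1 x) xA add1n => -[].
have [h Hh] := IH (A :\ x) (subset_trans (subD1set A x) AX) cA'.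
have xX := subsetP AX x xA.
have key (P : {set {set T}}) : partition P X -> (forall b, b \in P -> #|b| = 3) ->
    exists y z, [/\ pblock P x = [set x; y; z], x != y, x != z & y != z].
  move=> pP cP; have xc : x \in cover P by rewrite (cover_partition pP).
  have xb : x \in pblock P x by rewrite mem_pblock.
  exact: card3_dec (cP _ (pblock_mem xc)) xb.
have [y1 [z1 [e1 xy1 xz1 yz1]]] := key P1 pP1 c1.
have [y2 [z2 [e2 xy2 xz2 yz2]]] := key P2 pP2 c2.
pose F := [set V0; h y1; h z1; addV (h y1) (h z1); h y2; h z2; addV (h y2) (h z2)].
have cF : #|F| <= 7.
  rewrite /F; do 5 apply: card_setU1r_le.
  by rewrite cardsU1 cards1; case: (_ \notin _).
have [v vF] : exists v, v \in ~: F.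
  apply/card_gt0P; have := cardsC F; rewrite card_V.
  set a := #|F|; set b := #|~: F|; lia.
move: vF; rewrite !inE !negb_or => /andP[/andP[/andP[/andP[/andP[/andP[v0 vy1] vz1] vyz1] vy2] vz2] vyz2].
exists (fun k => if k == x then v else h k) => b bP.
case xb: (x \in b).
  have tP1 : trivIset P1 by case/and3P: pP1.
  have tP2 : trivIset P2 by case/and3P: pP2.
  have hb := Hh b bP.
  case/setUP: bP => bP.
    rewrite -(def_pblock tP1 bP xb) e1 in hb *.
    by apply: step_block.
  rewrite -(def_pblock tP2 bP xb) e2 in hb *.
  by apply: step_block.
have eb : b :&: A = b :&: (A :\ x).
  by apply/setP => w; rewrite !inE; case: (eqVneq w x) => [->|]; rewrite ?xb.
rewrite eb; apply: pind_ext (Hh b bP) => k0; rewrite !inE => /andP[_ /andP[kx _]].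
by rewrite (negbTE kx).
Qed.

End Greedy.


Definition o0 : 'I_3 := @Ordinal 3 0 isT.
Definition o1 : 'I_3 := @Ordinal 3 1 isT.
Definition o2 : 'I_3 := @Ordinal 3 2 isT.
Definition enc (s c : bool) : 'I_3 := if c == s then o2 else o1.

Lemma enc_neq s s' c : s != s' -> enc s c != enc s' c.
Proof. by case: s s' c => [] [] []. Qed.
Lemma enc_inj s c c' : enc s c = enc s c' -> c = c'.
Proof. by case: s c c' => [] [] []. Qed.
Lemma enc_nz s c : val (enc s c) != 0.
Proof. by case: s c => [] []. Qed.
Lemma enc_back (a : 'I_3) s : val a != 0 -> enc s (a == enc s true) = a.
Proof. by case: a => [[|[|[|a]]] ha] //; case: s => _; apply: val_inj. Qed.

Lemma pind_indep3 (T : finType) (h : T -> V) x y z : x != y -> x != z -> y != z ->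
  pind h [set x; y; z] -> indep3 (h x) (h y) (h z).
Proof.
move=> xy xz yz [H1 H2 H3].
have mx : x \in [set x; y; z] by rewrite in_set3 eqxx.
have my : y \in [set x; y; z] by rewrite in_set3 eqxx orbT.
have mz : z \in [set x; y; z] by rewrite in_set3 eqxx !orbT.
rewrite /indep3 !H1 ?H2 //=.
by have := H3 (card3 xy xz yz); rewrite big3.
Qed.

Definition wordOf m (b : {set 'I_m}) (side : bool) (hh : 'I_m -> V) (i : V) : word 3 m :=
  [ffun k => if k \in b then enc side (dot (hh k) i) else o0].

Lemma supp_wordOf m (b : {set 'I_m}) side hh i : supp (wordOf b side hh i) = b.
Proof.
apply/setP => k; rewrite inE ffunE; case: (k \in b) => //; exact: enc_nz.
Qed.


Section Main.
Variables (m n : nat) (J : finType) (X : J -> {set 'I_m}) (Bl : J -> {set {set 'I_m}}).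
Hypothesis n9 : n %% 12 = 9.
Hypothesis HK : forall j, Bl j != set0 -> KTS (X j) (Bl j) /\ #|X j| = n.

Local Notation T := 'I_m.
Definition Dat := ({set {set {set T}}} * ({set {set T}} -> {set {set T}}) *
   ({set {set T}} -> bool) * ({set {set T}} -> T -> V))%type.

Definition Spec j (R : {set {set {set T}}}) sg (s : {set {set T}} -> bool) (h : {set {set T}} -> T -> V) :=
  [/\ partition R (Bl j), forall Pc, Pc \in R -> partition Pc (X j),
      forall P, P \in R -> [/\ sg P \in R, sg P != P, sg (sg P) = P & s (sg P) = ~~ s P],
      forall P, P \in R -> forall b, b \in P :|: sg P -> pind (h P) b
    & Bl j != set0 -> STS (X j) (Bl j) /\ #|X j| = n].

Lemma partition00 (U : finType) : partition (set0 : {set {set U}}) set0.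
Proof.
apply/and3P; split; rewrite ?inE //.
  by rewrite /cover big_set0.
by apply/trivIsetP => A B; rewrite inE.
Qed.

Lemma spec_exists j : exists d : Dat, Spec j d.1.1.1 d.1.1.2 d.1.2 d.2.
Proof.
case: (eqVneq (Bl j) set0) => [e|ne].
  exists (set0, id, (fun _ => true), (fun _ _ => V0)); split => //=; rewrite ?e.
  - exact: partition00.
  - by move=> Pc; rewrite inE.
  - by move=> P; rewrite inE.
  - by move=> P; rewrite inE.
  - by rewrite eqxx.
have [[S [R [pR pPc]]] cX] := HK ne.
have ev := kts_classes_even S pR pPc cX n9.
have [sg [s Hs]] := pairing ev.
have cb P : P \in R -> forall b, b \in P -> #|b| = 3.
  move=> PR b bP; have bB : b \in Bl j by apply: (subsetP (partitionS pR PR)).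
  by case: S => /(_ b bB) [].
have /fin_all_exists [h Hh] : forall P : {set {set T}}, exists hP : T -> V,
    P \in R -> forall b, b \in P :|: sg P -> pind hP b.
  move=> P; case PR: (P \in R); last by exists (fun _ => V0).
  have [sgR _ _ _] := Hs P PR.
  have [hP HP] := greedy (pPc P PR) (pPc _ sgR) (cb P PR) (cb _ sgR).
  by exists hP => _.
by exists (R, sg, s, h); split.
Qed.


Section Codes.
Variables (R : J -> {set {set {set T}}}) (sg : J -> {set {set T}} -> {set {set T}})
  (s : J -> {set {set T}} -> bool) (h : J -> {set {set T}} -> T -> V).
Hypothesis HS : forall j, Spec j (R j) (sg j) (s j) (h j).
Hypothesis mn : m <= n.+1.
Hypothesis Hcov : forall t : {set T}, #|t| = 3 -> exists j, t \in Bl j.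
Hypothesis Hdis : forall j j' t, t \in Bl j -> t \in Bl j' -> j = j'.

Definition Lab := (J * {set {set T}} * V)%type.

Definition code (l : Lab) : {set word 3 m} :=
  let: (j, P, i) := l in
  if (P \in R j) && s j P then [set wordOf b (b \in P) (h j P) i | b in P :|: sg j P] else set0.

Section Valid.
Variables (j : J) (P : {set {set T}}).
Hypothesis PR : P \in R j.

Lemma v_facts : [/\ sg j P \in R j, sg j P != P, sg j (sg j P) = P & s j (sg j P) = ~~ s j P].
Proof. by case: (HS j) => _ _ H _ _; apply: H. Qed.

Lemma v_blockB b : b \in P :|: sg j P -> b \in Bl j.
Proof.
have [pR _ _ _ _] := HS j; have [sR _ _ _] := v_facts.
by case/setUP => bP; [apply: (subsetP (partitionS pR PR)) | apply: (subsetP (partitionS pR sR))].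
Qed.

Lemma v_ne : Bl j != set0.
Proof.
have [_ pPc _ _ _] := HS j.
have [x0 x0P] : exists b, b \in P.
  apply/set0Pn; apply: contraTneq PR => ->; by case: (HS j) => /and3P[].
by apply/set0Pn; exists x0; apply: v_blockB; rewrite inE x0P.
Qed.

Lemma v_sts : STS (X j) (Bl j) /\ #|X j| = n.
Proof. by case: (HS j) => _ _ _ _ /(_ v_ne). Qed.

Lemma v_card3 b : b \in P :|: sg j P -> #|b| = 3.
Proof. by move=> bP; have [[H _] _] := v_sts; have [] := H b (v_blockB bP). Qed.

Lemma v_disj b : b \in sg j P -> b \notin P.
Proof.
have [_ _ _ _ _] := HS j; have [pR _ _ _ _] := HS j; have [sR ne _ _] := v_facts.
apply: contraL => bP; apply/negP => bs; move: ne.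
have tR : trivIset (R j) by case/and3P: pR.
by rewrite (triv_eq tR sR PR bs bP) eqxx.
Qed.

Lemma v_cardP Q : Q \in R j -> #|Q| * 3 = n.
Proof.
move=> QR; have [_ pPc _ _ _] := HS j; have [_ cX] := v_sts.
rewrite -cX (card_partition (pPc _ QR)) -sum_nat_const; apply: eq_bigr => b bQ.
have [[H _] _] := v_sts; have [pR _ _ _ _] := HS j.
by have [] := H b (subsetP (partitionS pR QR) b bQ).
Qed.

Hypothesis sP : s j P.

Lemma code_card i : 3 * #|code (j, P, i)| = 2 * n.
Proof.
rewrite /code PR sP /= card_in_imset; last first.
  by move=> b b' _ _ e; rewrite -(supp_wordOf b (b \in P) (h j P) i) e supp_wordOf.
have [sR _ _ _] := v_facts.
have := cardsUI P (sg j P).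
have -> : P :&: sg j P = set0.
  apply/setP => b; rewrite !inE; apply/negP => /andP[bP bs].
  by move: (v_disj bs); rewrite bP.
rewrite cards0 addn0 => ->.
have := v_cardP PR; have := v_cardP sR.
set a := #|P|; set b := #|sg j P|; lia.
Qed.

Lemma code_is_code i : is_code 5 3 (code (j, P, i)).
Proof.
have cc := code_card i.
have [Sts _] := v_sts.
apply/and3P; split.
- apply/set0Pn/card_gt0P; move: cc; set a := #|_|; lia.
- apply/subsetP => w; rewrite /code PR sP /= => /imsetP[b bP ->].
  by rewrite inE /wt -/(supp _) supp_wordOf (v_card3 bP).
- apply/forall_inP => u; rewrite /code PR sP /= => /imsetP[b bP ->].
  apply/forall_inP => v /imsetP[b' b'P ->]; apply/implyP => neq.
  have bb' : b != b' by apply: contraNneq neq => ->.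
  apply: hdist_ge5; rewrite ?supp_wordOf ?(v_card3 bP) ?(v_card3 b'P) //.
    exact: sts_meet Sts (v_blockB bP) (v_blockB b'P) bb'.
  move=> x xb xb'; rewrite !ffunE xb xb'; apply: enc_neq.
  have [_ pPc _ _ _] := HS j; have [sR _ _ _] := v_facts.
  apply/negP => /eqP e.
  case bin: (b \in P).
    have tP1 : trivIset P by case/and3P: (pPc _ PR).
    by move: bb'; rewrite (triv_eq tP1 bin _ xb xb') ?eqxx // -e bin.
  have tP : trivIset (sg j P) by case/and3P: (pPc _ sR).
  have bs : b \in sg j P by move: bP; rewrite inE bin.
  have bs' : b' \in sg j P by move: b'P; rewrite inE -e bin.
  by move: bb'; rewrite (triv_eq tP bs bs' xb xb') eqxx.
Qed.

Lemma code_optimal_l i : optimal_code 5 3 (code (j, P, i)).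
Proof.
apply: code_optimal; first exact: code_is_code.
have := code_card i; set a := #|_|; lia.
Qed.

End Valid.

Lemma code_cover w : w \in Hqnw 3 m 3 -> exists l, w \in code l.
Proof.
rewrite inE => /eqP wt3; set t := supp w.
have ct : #|t| = 3 by [].
have [j tB] := Hcov ct.
have [pR _ _ Hh _] := HS j.
have tc : t \in cover (R j) by rewrite (cover_partition pR).
have QR := pblock_mem tc.
have tQ : t \in pblock (R j) t by rewrite mem_pblock.
set Q := pblock (R j) t in QR tQ.
pose P := if s j Q then Q else sg j Q.
have [PR sP tP] : [/\ P \in R j, s j P & t \in P :|: sg j P].
  rewrite /P; case sQ: (s j Q).
    by split => //; rewrite inE tQ.
  have [sR _ ss so] := v_facts QR.
  by split => //; [rewrite so sQ | rewrite inE ss tQ orbT].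
pose side := t \in P.
have [x xt] : exists x, x \in t by apply/card_gt0P; rewrite ct.
have [y [z [et xy xz yz]]] := card3_dec ct xt.
have ind : indep3 (h j P x) (h j P y) (h j P z).
  by apply: pind_indep3 => //; rewrite -et; apply: Hh.
pose pb k := w k == enc side true.
have [i [ex ey ez]] := indep3_surj ind (pb x) (pb y) (pb z).
exists (j, P, i); rewrite /code PR sP /=; apply/imsetP; exists t => //.
apply/ffunP => k; rewrite ffunE.
case kt: (k \in t).
  have kn : val (w k) != 0 by move: kt; rewrite /t inE.
  move: kn; rewrite -/side.
  by move: kt; rewrite et in_set3 => /or3P[] /eqP -> kn; rewrite ?ex ?ey ?ez /pb enc_back.
apply: val_inj; move: kt; rewrite /t inE => /negbFE/eqP ->; by [].
Qed.

Lemma code_uniq w l l' : w \in code l -> w \in code l' -> code l = code l'.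
Proof.
case: l => [[j P] i]; case: l' => [[j' P'] i'].
rewrite /code; case: ifP => [/andP[PR sP]|]; last by rewrite inE.
case: ifP => [/andP[P'R sP']|]; last by rewrite inE.
move=> /imsetP[b bP ->] /imsetP[b' b'P e].
have ebb : b = b' by rewrite -(supp_wordOf b (b \in P) (h j P) i) e supp_wordOf.
subst b'.
have ej : j = j' := Hdis (v_blockB PR bP) (v_blockB P'R b'P).
subst j'.
have [pR _ _ Hh _] := HS j.
have tR : trivIset (R j) by case/and3P: pR.
have [sR _ ss so] := v_facts PR.
have [sR' _ ss' so'] := v_facts P'R.
have eP : P = P'.
  case/setUP: bP => bP; case/setUP: b'P => b'P.
  - exact: triv_eq tR PR P'R bP b'P.
  - by move: sP; rewrite (triv_eq tR PR sR' bP b'P) so' sP'.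
  - by move: sP'; rewrite -(triv_eq tR sR P'R bP b'P) so sP.
  - by rewrite -ss -ss' (triv_eq tR sR sR' bP b'P).
subst P'.
have [x xb] : exists x, x \in b by apply/card_gt0P; rewrite (v_card3 PR bP).
have [y [z [et xy xz yz]]] := card3_dec (v_card3 PR bP) xb.
have ind : indep3 (h j P x) (h j P y) (h j P z).
  by apply: pind_indep3 => //; rewrite -et; apply: Hh.
have ev k : k \in b -> dot (h j P k) i = dot (h j P k) i'.
  move=> kb; have := congr1 (fun f : word 3 m => f k) e; rewrite /= !ffunE kb.
  by move/enc_inj.
have my : y \in b by rewrite et in_set3 eqxx orbT.
have mz : z \in b by rewrite et in_set3 eqxx !orbT.
by rewrite (indep3_inj ind (ev _ xb) (ev _ my) (ev _ mz)).
Qed.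

Lemma code_sub l : code l \subset Hqnw 3 m 3.
Proof.
case: l => [[j P] i]; rewrite /code; case: ifP => [/andP[PR sP]|]; last by rewrite sub0set.
by have /and3P[_ + _] := code_is_code PR sP i; rewrite /code PR sP.
Qed.

Lemma code_opt l : code l != set0 -> optimal_code 5 3 (code l).
Proof.
case: l => [[j P] i]; rewrite /code; case: ifP => [/andP[PR sP] _|]; last by rewrite eqxx.
by have := code_optimal_l PR sP i; rewrite /code PR sP.
Qed.

Lemma toc_codes : TOC_exists 3 m 5 3.
Proof.
exists (code @: [set l | code l != set0]); split.
  apply/and3P; split.
  - apply/eqP/setP => w; apply/bigcupP/idP.
      by case=> C /imsetP[l _ ->]; apply: (subsetP (code_sub l)).
    move=> wH; have [l wl] := code_cover wH.
    exists (code l) => //; apply: imset_f; rewrite inE; apply/set0Pn; by exists w.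
  - apply/trivIsetP => A A' /imsetP[l _ ->] /imsetP[l' _ ->] neq.
    rewrite -setI_eq0; apply/eqP/setP => w; rewrite in_set0 in_setI; apply/negP => /andP[w1 w2].
    by move: neq; rewrite (code_uniq w1 w2) eqxx.
  - apply/imsetP => -[l]; rewrite inE => ne e.
    by move: ne; rewrite -e eqxx.
by move=> C /imsetP[l]; rewrite inE => ne ->; apply: code_opt.
Qed.

End Codes.

Lemma main_gen : m <= n.+1 ->
  (forall t : {set T}, #|t| = 3 -> exists j, t \in Bl j) ->
  (forall j j' t, t \in Bl j -> t \in Bl j' -> j = j') ->
  TOC_exists 3 m 5 3.
Proof.
move=> mn Hc Hd.
have /fin_all_exists [d Hdat] := spec_exists.
exact: (@toc_codes (fun j => (d j).1.1.1) (fun j => (d j).1.1.2) (fun j => (d j).1.2) (fun j => (d j).2)).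
Qed.

End Main.


Theorem corollary4p10 (n : nat) :
  n %% 12 = 9 ->
  (LKTS n -> TOC_exists 3 n 5 3) /\ (OLKTS n -> TOC_exists 3 n.+1 5 3).
Proof.
move=> n9; split.
  case=> L [pL HL].
  have tL : trivIset L by case/and3P: pL.
  apply: (@main_gen n n _ (fun _ : {set {set 'I_n}} => [set: 'I_n])
            (fun j => if j \in L then j else set0)) => //.
  - move=> j; case: ifP => jL ne; last by rewrite eqxx in ne.
    by split; [exact: HL | rewrite cardsT card_ord].
  - move=> t ct.
    have : t \in cover L by rewrite (cover_partition pL) inE ct.
    by case/bigcupP => j jL tj; exists j; rewrite jL.
  - move=> j j' t; case: ifP => jL; last by rewrite inE.
    case: ifP => j'L; last by rewrite inE.
    exact: triv_eq tL jL j'L.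
case=> Bf [Hd [Hu HK]].
apply: (@main_gen n.+1 n _ (fun x : 'I_n.+1 => [set: 'I_n.+1] :\ x) Bf) => //.
- move=> x _; split; first exact: HK.
  by have := cardsD1 x [set: 'I_n.+1]; rewrite cardsT card_ord inE add1n => -[].
- move=> t ct.
  have : t \in \bigcup_(x : 'I_n.+1) Bf x by rewrite Hu inE ct.
  by case/bigcupP => j _ tj; exists j.
- move=> j j' t tj tj'; apply/eqP; apply: contraT => jj'.
  have := Hd j j' jj'; rewrite -setI_eq0 => /eqP/setP/(_ t).
  by rewrite !inE tj tj'.
Qed.
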